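(* Consider the single-item sale in an economic network described in the context, and the mechanism IDM-TC defined there. If the economic network forms a tree, then IDM-TC is efficient, individually rational, incentive compatible and weakly budget balanced. Moreover, for every feasible type report profile, the seller's revenue under IDM-TC is at least the revenue of the Vickrey (second-price) auction run among the seller's direct neighbours, i.e. at least the second highest bid among the buyers in $r_s$.
   Context: Setting. A seller $s$ sells one indivisible commodity. Besides $s$, there is a set $N=\{1,\dots,n\}$ of agents, each either a buyer or an intermediate node. Each buyer $i$ has a private value $b_i\ge 0$ for the commodity. Each intermediate node $i$ has a private neighbour set $r_i\subseteq N$ (the agents with whom she can directly exchange the sale information) and a publicly known cost $c_i$ incurred if a trade passes through her. Buyers have no links among themselves. Initially only the seller's neighbours $r_s\subseteq N$ know of the sale. The type of buyer $i$ is $t_i=b_i$ and of intermediate node $i$ is $t_i=r_i$. A buyer reports a bid $t'_i=b'_i\ge 0$; an intermediate node reports $t'_i=r'_i\subseteq r_i$, meaning she passes the sale information to exactly $r'_i$; $t'_i=nil$ if $i$ is uninformed or does not participate. A trading chain from $s$ to $i$ under reports $t'$ is a simple path $(a_1,\dots,a_p,i)$ with $a_1\in r_s$, $a_l\in r'_{a_{l-1}}$ for $1<l\le p$, and $i\in r'_{a_p}$. A report profile $t'$ is feasible if for every $i$, $t'_i\ne nil$ iff there is a trading chain from $s$ to $i$ following the reports $t'_{-i}$; only feasible profiles are considered (when an agent changes her report, the others' profile adjusts so as to remain feasible). For an informed agent $i$, $LCC_i$ is a trading chain from $s$ to $i$ minimizing the total cost of the intermediate nodes on it other than $i$. For a buyer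 $i$, $SW_i=b'_i-\sum_{j\in LCC_i\setminus\{i\}}c_j$. Mechanisms and properties. A mechanism $(\pi,x)$ assigns to each feasible $t'$ an allocation $\pi_i(t')\in\{-1,0,1\}$ ($1$: $i$ is the winner; $-1$: $i$ lies on the selected trading chain to the winner; $0$: otherwise), with at most one winner and the agents with $\pi_i\neq 0$ forming a trading chain from $s$ to the winner, and payments $x_i(t')\in\mathbb R$ (paid by $i$ to the seller; negative means $i$ receives money). Agent $i$'s value is $v_i=b_i$ if $\pi_i=1$, $v_i=-c_i$ if $\pi_i=-1$, $v_i=0$ otherwise; her utility is $v_i-x_i(t')$. The social welfare is $\sum_i v_i$ (computed with reported types). An allocation is efficient if it maximizes social welfare for every feasible $t'$; equivalently it gives the item to $m=\arg\max_{i}SW_i$ along $LCC_m$. $W^*(t')$ is the maximum social welfare under $t'$; for a set $X$ of agents, $W^*_{-X}$ is the maximum social welfare under the profile $t'_{-X}$ in which the agents of $X$ do not participate. Individual rationality (IR): every buyer has nonnegative utility when bidding truthfully, and every intermediate node has nonnegative utility for every report $r'_i\subseteq r_i$ and whatever the others do. Incentive compatibility (IC): for every agent, reporting her true type ($b'_i=b_i$, resp. $r'_i=r_i$, i.e. sharing with all neighbours) maximizes her utility regardless of the others' reports. Weakly budget balanced: the revenue $\sum_{i\in N}x_i(t')$ is $\ge 0$ for every feasible $t'$. Diffusion critical agents. Agent $i$ is a diffusion critical agent of $j$ if every trading chain from $s$ to $j$ passes through $i$ (in particular $i$ is one of $j$'s). $d_i$ is the set of agents having $i$ as a diffusion critical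 agent. The diffusion critical sequence $C_j$ of $j$ is the set of all diffusion critical agents of $j$, ordered $s_1,\dots,s_k,j$ so that $d_{s_1}\supset d_{s_2}\supset\dots\supset d_{s_k}\supset d_j$. IDM-TC. Given feasible $t'$: allocate the item to $m=\arg\max_{i}SW_i$ (random tie-breaking) along $LCC_m$. Write $C_m=\{1,2,\dots,m\}$ in its order, and for $i\in C_m\setminus\{m\}$ let $i+1$ be its successor in $C_m$. Payments: $x_i=W^*_{-d_i}-W^*_{-d_{i+1}}-c_i$ if $i\in C_m\setminus\{m\}$; $x_i=-c_i$ if $i\in LCC_m\setminus C_m$; $x_m=W^*_{-m}+\sum_{j\in LCC_m\setminus\{m\}}c_j$; $x_i=0$ otherwise. The economic network forms a tree means that the undirected graph on $\{s\}\cup N$ whose edges join each of $s$ and the intermediate nodes to their neighbours is a tree.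
   Formalization: IDM-TC sells to $m=\arg\max_{i}SW_i$ along $LCC_m$ only when $SW_m\ge 0$; when every informed buyer has $SW_i\le 0$, the seller may keep the item and all payments are 0. The statement above fails without it. *)

(* Defs.v *)
From HB Require Import structures.
From mathcomp Require Import all_boot all_order all_algebra.
From mathcomp Require Import boolp classical_sets reals.
Set Implicit Arguments. Unset Strict Implicit. Unset Printing Implicit Defensive.
Import Order.TTheory GRing.Theory Num.Theory.
Local Open Scope ring_scope.
Local Open Scope classical_set_scope.

(* Public data of the economic network.  Agents are the elements of the     *)
(* finite type [A] (the set N); the seller s is not an element of [A].       *)
Record env (A : finType) (R : realType) := Env {
  buyer : pred A;          (* buyer i  <->  i is a buyer; otherwise intermediate *)
  cost  : A -> R;
  rs    : {set A}
}.

(* A (type or report) profile: [bid t i] is b_i (meaningful for buyers),   *)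
(* [nbr t i] is r_i (meaningful for intermediate nodes).  The value [nil]   *)
(* of uninformed agents is not stored: whether an agent is informed is      *)
(* derived from the others' reports (feasibility), and the stored report of *)
(* an uninformed agent is never used.                                        *)
Record profile (A : finType) (R : realType) := Profile {
  bid : A -> R;
  nbr : A -> {set A}
}.

Section Defs.
Variables (A : finType) (R : realType) (e : env A R).

(* u passes the information to v under reports t, when agents of X do not *)
Definition link (t : profile A R) (X : set A) (u v : A) : Prop :=
  ~ X u /\ ~ X v /\ ~~ buyer e u /\ v \in nbr t u.

Fixpoint links (E : A -> A -> Prop) (x : A) (q : seq A) : Prop :=
  match q with
  | [::] => True
  | y :: q' => E x y /\ links E y q'
  end.

Definition chain (t : profile A R) (X : set A) (p : seq A) : Prop :=
  match p with
  | [::] => False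
  | x :: q => x \in rs e /\ ~ X x /\ links (link t X) x q /\ uniq p
  end.

Definition informed (t : profile A R) (X : set A) (j : A) : Prop :=
  exists q, chain t X (rcons q j).

Definition feasible (tt t : profile A R) : Prop :=
  forall i, informed t set0 i ->
    (buyer e i -> 0 <= bid t i) /\ (~~ buyer e i -> nbr t i \subset nbr tt i).

(* Allocations: [None] = no trade; [Some (m, q)] = m wins and the trading  *)
(* chain is rcons q m (the agents of q get pi_i = -1).                     *)
Definition alloc := option (A * seq A).

Definition valid_alloc (t : profile A R) (X : set A) (a : alloc) : Prop :=
  match a with
  | None => True
  | Some (m, q) => buyer e m /\ chain t X (rcons q m)
  end.

Definition welfare (t : profile A R) (a : alloc) : R :=
  match a with
  | None => 0
  | Some (m, q) => bid t m - \sum_(k <- q) cost e k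
  end.

Definition Wstar (t : profile A R) (X : set A) : R :=
  sup [set welfare t a | a in [set a | valid_alloc t X a]].

Definition lcc_cost (t : profile A R) (j : A) : R :=
  inf [set \sum_(k <- q) cost e k | q in [set q | chain t set0 (rcons q j)]].

Definition SW (t : profile A R) (j : A) : R := bid t j - lcc_cost t j.

Definition critical (t : profile A R) (i j : A) : Prop :=
  informed t set0 j /\ forall q, chain t set0 (rcons q j) -> i \in rcons q j.

Definition dset (t : profile A R) (i : A) : set A := [set j | critical t i j].

(* j is the successor of i in the diffusion critical sequence C_m *)
Definition crit_succ (t : profile A R) (m i j : A) : Prop :=
  critical t j m /\ j <> i /\ dset t j `<=` dset t i /\
  forall k, critical t k m -> k <> i -> dset t k `<=` dset t i ->
    dset t k `<=` dset t j.

(* Random tie-breaking is modelled by allowing every maximiser.             *)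
Definition idm_tc (t : profile A R) (a : alloc) (x : A -> R) : Prop :=
  match a with
  | None =>
      (forall j, buyer e j -> informed t set0 j -> SW t j <= 0) /\
      (forall i, x i = 0)
  | Some (m, q) =>
      buyer e m /\ chain t set0 (rcons q m) /\
          \sum_(k <- q) cost e k = lcc_cost t m /\
          0 <= SW t m /\
          (forall j, buyer e j -> informed t set0 j -> SW t j <= SW t m) /\
          (forall i,
             (i = m -> x i = Wstar t [set m] + \sum_(k <- q) cost e k) /\
             (i <> m -> critical t i m ->
                exists j, crit_succ t m i j /\
                  x i = Wstar t (dset t i) - Wstar t (dset t j) - cost e i) /\
             (i <> m -> ~ critical t i m -> i \in q -> x i = - cost e i) /\
             (i <> m -> ~ critical t i m -> i \notin q -> x i = 0))
  end.

Definition mechanism := profile A R -> alloc -> (A -> R) -> Prop.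

Definition utility (tt : profile A R) (a : alloc) (x : A -> R) (i : A) : R :=
  match a with
  | None => 0
  | Some (m, q) =>
      (if i == m then bid tt m else if i \in q then - cost e i else 0)
  end - x i.

Definition revenue (x : A -> R) : R := \sum_(i : A) x i.

Definition truthful_at (tt t : profile A R) (i : A) : Prop :=
  if buyer e i then bid t i = bid tt i else nbr t i = nbr tt i.

Definition same_except (t t' : profile A R) (i : A) : Prop :=
  forall k, k <> i -> bid t k = bid t' k /\ nbr t k = nbr t' k.

Definition efficient (tt : profile A R) (M : mechanism) : Prop :=
  forall t a x, feasible tt t -> M t a x ->
    forall a', valid_alloc t set0 a' -> welfare t a' <= welfare t a.

Definition individually_rational (tt : profile A R) (M : mechanism) : Prop :=
  forall t a x i, feasible tt t -> M t a x ->
    (buyer e i -> truthful_at tt t i -> 0 <= utility tt a x i) /\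
    (~~ buyer e i -> 0 <= utility tt a x i).

Definition incentive_compatible (tt : profile A R) (M : mechanism) : Prop :=
  forall i t t' a x a' x',
    feasible tt t -> feasible tt t' -> same_except t t' i ->
    truthful_at tt t i -> M t a x -> M t' a' x' ->
    utility tt a' x' i <= utility tt a x i.

Definition weakly_budget_balanced (tt : profile A R) (M : mechanism) : Prop :=
  forall t a x, feasible tt t -> M t a x -> 0 <= revenue x.

(* revenue >= second highest bid among the buyers in r_s (Vickrey revenue); *)
(* with fewer than two such buyers the Vickrey revenue is 0, which is       *)
(* covered by weak budget balance.                                          *)
Definition revenue_ge_vickrey (tt : profile A R) (M : mechanism) : Prop :=
  forall t a x, feasible tt t -> M t a x ->
    forall j k, j \in rs e -> k \in rs e -> buyer e j -> buyer e k -> j != k ->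
      Num.min (bid t j) (bid t k) <= revenue x.

End Defs.

(* The undirected graph on {s} \cup N (None = seller) whose edges join s and *)
(* each intermediate node to its (true) neighbours.                          *)
Definition net_adj (A : finType) (R : realType) (e : env A R) (tt : profile A R)
  : rel (option A) :=
  fun u v =>
    match u, v with
    | None, None => false
    | None, Some w | Some w, None => w \in rs e
    | Some u', Some v' =>
        (~~ buyer e u' && (v' \in nbr tt u')) || (~~ buyer e v' && (u' \in nbr tt v'))
    end.

Definition is_tree (V : finType) (adj : rel V) : Prop :=
  irreflexive adj /\ (forall x y, connect adj x y) /\
  (forall p : seq V, uniq p -> (2 < size p)%N -> ~~ cycle adj p).

(* Main.v *)
Require Import Defs.
From HB Require Import structures.
From mathcomp Require Import all_boot all_order all_algebra.
From mathcomp Require Import boolp classical_sets reals.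
From mathcomp Require Import zify ring lra.
Import Order.TTheory GRing.Theory Num.Theory.
Local Open Scope ring_scope.
Local Open Scope classical_set_scope.
Set Implicit Arguments. Unset Strict Implicit. Unset Printing Implicit Defensive.

Section TreePaths.
Variables (V : eqType) (adj : rel V).
Hypothesis adj_sym : symmetric adj.
Hypothesis nocyc : forall c : seq V, uniq c -> (2 < size c)%N -> ~~ cycle adj c.

Lemma cyc_case x y1 r1 a b :
  path adj x (y1 :: r1) -> path adj x (a ++ last y1 r1 :: b) ->
  uniq (x :: y1 :: r1) -> uniq (x :: a ++ last y1 r1 :: b) ->
  y1 != head (last y1 r1) a ->
  ~~ has (mem (a ++ last y1 r1 :: b)) (belast y1 r1) -> False.
Proof.
set z := last y1 r1 => P1 P2 U1 U2 Hne Hh.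
have := nocyc (c := x :: y1 :: r1 ++ rev a).
have [Ua zNa xNa] : [/\ uniq a, z \notin a & x \notin a].
  by move: U2; rewrite cons_uniq cat_uniq mem_cat negb_or /= => /and5P[/andP[-> _] -> /norP[-> _] _ _].
have -> : uniq (x :: y1 :: r1 ++ rev a).
  rewrite -[x :: _]/((x :: y1 :: r1) ++ rev a) cat_uniq U1 rev_uniq Ua andbT /=.
  apply/hasPn => w; rewrite mem_rev => wa.
  apply/negP; rewrite in_cons => /orP[/eqP wx|].
    by move: xNa; rewrite -wx wa.
  rewrite lastI -/z mem_rcons inE => /orP[/eqP wz|wb].
    by move: zNa; rewrite -wz wa.
  move/hasPn: Hh => /(_ w wb) H.
  by move: H; rewrite /= mem_cat wa.
have -> : (2 < size (x :: y1 :: r1 ++ rev a))%N.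
  rewrite /= size_cat size_rev.
  case E: r1 => [|r0 r1'] //=.
  move: Hne; rewrite /z E /=.
  by case: (a) => //=; rewrite eqxx.
move=> /(_ isT isT); apply/negP/negPn.
rewrite /cycle -[y1 :: r1 ++ rev a]/((y1 :: r1) ++ rev a) rcons_cat cat_path P1 /=.
have : path adj x (rcons a z) by move: P2; rewrite -cat_rcons cat_path => /andP[].
rewrite -rev_path last_rcons belast_rcons rev_cons => P3.
rewrite -/z; move: P3; rewrite (@eq_path _ _ adj) // => u v; exact: adj_sym.
Qed.

Lemma head_cat_cons (x z : V) a b : head x (a ++ z :: b) = head z a.
Proof. by case: a. Qed.

Lemma no_fork n x p1 p2 : (size p1 <= n)%N ->
  path adj x p1 -> path adj x p2 -> uniq (x :: p1) -> uniq (x :: p2) ->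
  head x p1 != head x p2 -> last x p1 \in p2 -> False.
Proof.
elim: n p1 => [|n IH] p1 Hs P1 P2 U1 U2 Hne Hl.
  case: p1 Hs {P1 U1 Hne} Hl => //= _ Hl.
  by move: U2; rewrite /= Hl.
case: p1 Hs P1 U1 Hne Hl => [|y1 r1] Hs P1 U1 Hne Hl.
  by move: U2; rewrite /= Hl.
have [Hh|Hh] := boolP (has (mem p2) (belast y1 r1)).
- case/hasP: Hh => w wb wp2.
  case/splitPr E: _ / wb => [c1 c2].
  have E1 : y1 :: r1 = rcons c1 w ++ rcons c2 (last y1 r1).
    by rewrite {1}lastI E cat_rcons rcons_cat.
  apply: (IH (rcons c1 w)) => //.
  + move: Hs; rewrite -[size (y1 :: r1)]/(size (y1 :: r1)) E1 size_cat !size_rcons.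
    by lia.
  + by move: P1; rewrite E1 cat_path => /andP[].
  + by move: U1; rewrite E1 -cat_cons cat_uniq => /andP[].
  + by move: Hne; rewrite E1; case: (c1).
  + by rewrite last_rcons.
- case/splitPr: Hl P2 U2 Hne Hh => a b P2 U2 Hne Hh.
  apply: (cyc_case P1 P2 U1 U2) => //.
  by move: Hne; rewrite /= head_cat_cons.
Qed.

Lemma path_unique x p1 p2 :
  path adj x p1 -> path adj x p2 -> uniq (x :: p1) -> uniq (x :: p2) ->
  last x p1 = last x p2 -> p1 = p2.
Proof.
elim: p1 x p2 => [|y1 r1 IH] x [|y2 r2] //= P1 P2 U1 U2 El.
- by move: U2; rewrite El /= mem_last.
- by move: U1; rewrite -El /= mem_last.
have [Ey|Ney] := eqVneq y1 y2.
  subst y2; congr (_ :: _); apply: IH El.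
  + by case/andP: P1.
  + by case/andP: P2.
  + by case/andP: U1.
  + by case/andP: U2.
exfalso; apply: (@no_fork (size (y1 :: r1)) x (y1 :: r1) (y2 :: r2)) => //=.
by rewrite El mem_last.
Qed.
End TreePaths.

Section Chains.
Variables (R : realType) (A : finType) (e : env A R).
Implicit Types (t : profile A R) (X Y : set A) (p q : seq A).

Lemma links_cat (E : A -> A -> Prop) (x : A) a b : links E x (a ++ b) <-> links E x a /\ links E (last x a) b.
Proof. elim: a x => [|y a IH] x /=; first by tauto. by rewrite IH; tauto. Qed.

Lemma links_mono (E E' : A -> A -> Prop) x q :
  (forall u v, E u v -> E' u v) -> links E x q -> links E' x q.
Proof. by move=> H; elim: q x => [|y q IH] x //= [/H ? /IH]. Qed.

Lemma links_src (E E' : A -> A -> Prop) x q :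
  (forall u v, u \in belast x q -> E u v -> E' u v) -> links E x q -> links E' x q.
Proof.
elim: q x => [|y q IH] x //= H [Exy L]; split.
  by apply: H => //; rewrite inE eqxx.
by apply: IH L => u v uq; apply: H; rewrite inE uq orbT.
Qed.

Lemma links_X t X x q : ~ X x ->
  (links (link e t X) x q <-> links (link e t set0) x q /\ forall v, v \in q -> ~ X v).
Proof.
elim: q x => [|y q IH] x Xx /=; first by split => // _; split.
split.
- move=> [[_ [Xy [b n]]] L]; have [L0 H] := (IH y Xy).1 L.
  split; first by split=> //; split=> //; split.
  by move=> v; rewrite inE => /orP[/eqP ->|/H].
- move=> [[[_ [_ [b n]]] L] H].
  have Xy : ~ X y by apply: H; rewrite inE eqxx.
  split; first by do !split.
  apply/(IH y Xy); split=> // v vq; by apply: H; rewrite inE vq orbT.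
Qed.

Lemma chain_X t X p :
  chain e t X p <-> chain e t set0 p /\ forall v, v \in p -> ~ X v.
Proof.
case: p => [|x q] /=; first by split => // -[].
split.
- move=> [xr [Xx [L U]]]; have [L0 H] := (links_X t q Xx).1 L.
  split; first by split=> //; split=> //.
  by move=> v; rewrite inE => /orP[/eqP ->|/H].
- move=> [[xr [_ [L U]]] H].
  have Xx : ~ X x by apply: H; rewrite inE eqxx.
  split=> //; split=> //; split=> //.
  apply/(links_X t q Xx); split=> // v vq; by apply: H; rewrite inE vq orbT.
Qed.

Lemma chain_set0 t X p : chain e t X p -> chain e t set0 p.
Proof. by case/chain_X. Qed.

Lemma chain_notX t X p v : chain e t X p -> v \in p -> ~ X v.
Proof. by case/chain_X => _; apply. Qed.

Lemma chain_uniq t X p : chain e t X p -> uniq p.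
Proof. by case: p => [|x q] //= [_ [_ [_ ->]]]. Qed.

Lemma chain_prefix t X a k b : chain e t X (rcons a k ++ b) -> chain e t X (rcons a k).
Proof.
case: a => [|x a] /=.
  by move=> [kr [Xk [L U]]]; split=> //; split=> //.
move=> [xr [Xx [/links_cat [L _] U]]]; split=> //; split=> //; split=> //.
by move: U; rewrite mem_cat negb_or cat_uniq => /andP[/andP[-> _] /andP[-> _]].
Qed.

Lemma chain_prefix' t X a k b : chain e t X (a ++ k :: b) -> chain e t X (rcons a k).
Proof. by rewrite -cat_rcons; apply: chain_prefix. Qed.

Lemma chain_link t X a k y b : chain e t X (a ++ k :: y :: b) -> link e t X k y.
Proof.
case: a => [|x a] /=; first by move=> [_ [_ [[L _] _]]].
move=> [_ [_ [/links_cat [_ /= [_ [L _]]] _]]].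
by [].
Qed.

Lemma chain_nonbuyer t X q m k : chain e t X (rcons q m) -> k \in q -> ~~ buyer e k.
Proof.
move=> C kq; move: C; case/splitPr: kq => a b; rewrite rcons_cat /=.
by case: b => [|y b] /= /chain_link [_ [_ []]].
Qed.

Lemma informed_mem t X q j k : chain e t X (rcons q j) -> k \in rcons q j ->
  informed e t set0 k.
Proof.
move=> /chain_set0 C kq; move: C; case/splitPr: kq => a b C; exists a.
by move: C; apply: chain_prefix'.
Qed.

End Chains.

Section Tree.
Variables (R : realType) (A : finType) (e : env A R) (tt : profile A R).
Hypothesis tree : is_tree (net_adj e tt).
Implicit Types (t : profile A R) (X Y : set A) (p q : seq A).

Lemma net_adj_sym : symmetric (net_adj e tt).
Proof. by case=> [u|] [v|] //=; rewrite orbC. Qed.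

Lemma chain_path_aux t pre x q : feasible e tt t ->
  chain e t set0 (rcons pre x ++ q) -> path (net_adj e tt) (Some x) (map Some q).
Proof.
move=> F; elim: q pre x => [|y q IH] pre x //= C.
apply/andP; split; last first.
  by apply: (IH (rcons pre x)); rewrite cat_rcons.
have [_ [_ [b n]]] : link e t set0 x y.
  by move: C; rewrite cat_rcons; apply: chain_link.
have Ix : informed e t set0 x by exists pre; apply: chain_prefix C.
have [_ /(_ b) /fintype.subsetP sub] := F x Ix.
by rewrite /= b (sub _ n).
Qed.

Lemma chain_path t p : feasible e tt t -> chain e t set0 p ->
  path (net_adj e tt) None (map Some p) /\ uniq (None :: map Some p).
Proof.
move=> F C; split.
  case: p C => [|x q] // C.
  rewrite /= (chain_path_aux (pre := [::]) F) ?andbT //.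
  by case: C.
rewrite /= (map_inj_uniq (@Some_inj _)) (chain_uniq C) andbT.
by apply/mapP => -[].
Qed.

Lemma chain_unique t X Y q q' v : feasible e tt t ->
  chain e t X (rcons q v) -> chain e t Y (rcons q' v) -> q = q'.
Proof.
move=> F /chain_set0 C /chain_set0 C'.
have [P U] := chain_path F C; have [P' U'] := chain_path F C'.
case: tree => _ [_ nc].
have El : (last None (map Some (rcons q v)) = last None (map Some (rcons q' v))).
  by rewrite !map_rcons !last_rcons.
have := path_unique net_adj_sym nc P P' U U' El.
by move/(inj_map (@Some_inj _))/rcons_inj => [].
Qed.
End Tree.

Section Crit.
Variables (R : realType) (A : finType) (e : env A R) (tt : profile A R).
Implicit Types (t : profile A R) (X Y : set A) (p q : seq A).

Lemma crit_self t j : informed e t set0 j -> critical e t j j.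
Proof. by move=> I; split=> // q _; rewrite mem_rcons mem_head. Qed.

Lemma crit_mem t X i q m : critical e t i m -> chain e t X (rcons q m) -> i \in rcons q m.
Proof. by move=> [_ H] /chain_set0 /H. Qed.

Lemma crit_trans t a b c : critical e t a b -> critical e t b c -> critical e t a c.
Proof.
move=> [_ Hab] [Ic Hbc]; split=> // q C.
case/splitPr E: _ / (Hbc q C) => [u w].
have /Hab : chain e t set0 (rcons u b) by apply: (@chain_prefix' _ _ _ _ _ _ _ w); rewrite -E.
by rewrite -cat_rcons mem_cat => ->.
Qed.

Lemma dset_sub t a b : critical e t a b -> dset e t b `<=` dset e t a.
Proof. by move=> Hab c Hbc; apply: crit_trans Hbc. Qed.

Lemma crit_iff t X q v a : is_tree (net_adj e tt) -> feasible e tt t ->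
  chain e t X (rcons q v) -> (critical e t a v <-> a \in rcons q v).
Proof.
move=> T F C; split; first by move=> H; apply: crit_mem H C.
move=> aq; split; first by exists q; apply: chain_set0 C.
by move=> q' C'; rewrite -(chain_unique T F C C').
Qed.

End Crit.

Section Welfare.
Variables (R : realType) (A : finType) (e : env A R).
Implicit Types (t : profile A R) (X Y : set A) (p q : seq A).

Definition Bnd t : R := \sum_k `|bid t k| + \sum_k `|cost e k|.

Lemma sum_seq_le (F : A -> R) q : uniq q -> (forall k, 0 <= F k) ->
  \sum_(k <- q) F k <= \sum_k F k.
Proof.
move=> U F0; rewrite big_uniq // big_mkcond /=.
by apply: ler_sum => k _; case: ifP.
Qed.

Lemma welfare_le_B t X a : valid_alloc e t X a -> welfare e t a <= Bnd t.
Proof.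
case: a => [[m q] [_ C]|_] /=; last by rewrite addr_ge0 // sumr_ge0.
have U : uniq q by move: (chain_uniq C); rewrite rcons_uniq => /andP[].
apply: lerD.
  apply: le_trans (ler_norm _) _.
  by rewrite (bigD1 m) //= lerDl sumr_ge0.
have H := @sum_seq_le (fun k => `|cost e k|) _ U (fun k => normr_ge0 _).
rewrite -sumrN; apply: (le_trans _ H).
by apply: ler_sum => k _; rewrite -normrN ler_norm.
Qed.

Definition Wset t X := [set welfare e t a | a in [set a | valid_alloc e t X a]].

Lemma Wset_ub t X : has_ubound (Wset t X).
Proof. by exists (Bnd t) => y [a Va <-]; apply: welfare_le_B Va. Qed.

Lemma W_ub t X a : valid_alloc e t X a -> welfare e t a <= Wstar e t X.
Proof. by move=> Va; apply: (ub_le_sup (Wset_ub t X)); exists a. Qed.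

Lemma W_le t X c : (forall a, valid_alloc e t X a -> welfare e t a <= c) ->
  Wstar e t X <= c.
Proof.
move=> H; apply: ge_sup; first by exists 0; exists None.
by move=> y [a Va <-]; apply: H.
Qed.

Lemma W_ge0 t X : 0 <= Wstar e t X.
Proof. by have := @W_ub t X None I. Qed.

Lemma W_trans t t' X Y :
  (forall a, valid_alloc e t X a -> valid_alloc e t' Y a /\ welfare e t a = welfare e t' a) ->
  Wstar e t X <= Wstar e t' Y.
Proof. by move=> H; apply: W_le => a /H [Va ->]; apply: W_ub. Qed.

Lemma W_eq t t' X Y :
  (forall a, valid_alloc e t X a <-> valid_alloc e t' Y a) ->
  (forall a, valid_alloc e t X a -> welfare e t a = welfare e t' a) ->
  Wstar e t X = Wstar e t' Y.
Proof.
move=> H1 H2; apply/le_anti/andP; split; apply: W_trans => a.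
  by move=> Va; split; [apply/H1| apply: H2].
by move=> Va; have Va' := (H1 a).2 Va; split=> //; rewrite H2.
Qed.

Lemma valid_X t X a : valid_alloc e t X a <->
  valid_alloc e t set0 a /\ (forall m q, a = Some (m, q) -> forall v, v \in rcons q m -> ~ X v).
Proof.
case: a => [[m q]|] /=; last by split => // _; split.
split.
  by move=> [b /chain_X [C H]]; split=> // m' q' [<- <-].
by move=> [[b C] H]; split=> //; apply/chain_X; split=> //; apply: H.
Qed.

Lemma valid_set0 t X a : valid_alloc e t X a -> valid_alloc e t set0 a.
Proof. by case/valid_X. Qed.

Lemma W_le_W0 t X : Wstar e t X <= Wstar e t set0.
Proof. by apply: W_trans => a Va; split=> //; apply: valid_set0 Va. Qed.

Lemma W_anti t X Y : X `<=` Y -> Wstar e t Y <= Wstar e t X.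
Proof.
move=> XY; apply: W_trans => a /valid_X [V0 H]; split=> //.
by apply/valid_X; split=> // m q E v vq Xv; apply: (H m q E v vq); apply: XY.
Qed.

Lemma lcc_lb t q j : chain e t set0 (rcons q j) -> lcc_cost e t j <= \sum_(k <- q) cost e k.
Proof.
move=> C; apply: (ge_inf _); last by exists q.
exists (- \sum_k `|cost e k|) => y [q' C' <-].
have U : uniq q' by move: (chain_uniq C'); rewrite rcons_uniq => /andP[].
have H := @sum_seq_le (fun k => `|cost e k|) _ U (fun k => normr_ge0 _).
rewrite lerNl -sumrN; apply: (le_trans _ H).
by apply: ler_sum => k _; rewrite -normrN ler_norm.
Qed.

End Welfare.

Lemma uniq_split (T : eqType) (a b c d : seq T) (x : T) :
  uniq (a ++ x :: b) -> a ++ x :: b = c ++ x :: d -> a = c /\ b = d.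
Proof.
move=> U E.
have xa : x \notin a by move: U; rewrite cat_uniq /= => /and4P[_ /norP[]].
have xc : x \notin c by move: U; rewrite E cat_uniq /= => /and4P[_ /norP[]].
have S : size a = size c.
  have := congr1 (index x) E.
  by rewrite !index_cat (negbTE xa) (negbTE xc) /= eqxx !addn0.
by move/eqP: E; rewrite eqseq_cat // => /andP[/eqP -> /eqP [->]].
Qed.




Section Outcome.
Variables (R : realType) (A : finType) (e : env A R) (tt : profile A R).
Implicit Types (t : profile A R) (X Y : set A) (p q : seq A).

Lemma WD t i : informed e t set0 i -> Wstar e t (dset e t i) = Wstar e t [set i].
Proof.
move=> Ii; apply: (@W_eq _ _ e t t) => [a|a _ //].
split=> /valid_X [V0 H]; apply/valid_X; split=> // m q E v vq.
  by move=> /= vi; apply: (H m q E v vq); rewrite vi; apply: crit_self.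
move=> /= [_ Hc]; move: (H m q E) => H'.
have Cm : chain e t set0 (rcons q m) by move: V0; rewrite E => -[].
case/splitPr E2: _ / vq => [pre post].
rewrite E2 in Cm H'.
have /Hc : chain e t set0 (rcons pre v) by apply: chain_prefix' Cm.
move=> ip; apply: (H' i) => //.
by rewrite -cat_rcons mem_cat ip.
Qed.

Lemma succ_id t q m u i n w j : is_tree (net_adj e tt) -> feasible e tt t ->
  chain e t set0 (rcons q m) -> rcons q m = u ++ i :: n :: w ->
  crit_succ e t m i j -> dset e t j = dset e t n.
Proof.
move=> T F C E [Cj [ji [ji_sub Hmax]]].
have U : uniq (u ++ i :: n :: w) by rewrite -E; apply: chain_uniq C.
have Cn : chain e t set0 (rcons (rcons u i) n).
  by apply: (@chain_prefix' _ _ _ _ _ _ _ w); rewrite cat_rcons -E.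
have Cin : critical e t i n.
  by apply/(crit_iff _ T F Cn); rewrite mem_rcons inE mem_rcons mem_head orbT.
have Cnm : critical e t n m by apply/(crit_iff _ T F C); rewrite E mem_cat !inE eqxx !orbT.
have ni : n <> i.
  by move=> ni; move: U; rewrite cat_uniq => /and3P[_ _]; rewrite ni /= inE eqxx.
apply/seteqP; split; last by apply: Hmax => //; apply: dset_sub.
apply: dset_sub.
have jP : j \in rcons q m by apply: crit_mem Cj C.
have Ij : informed e t set0 j by apply: informed_mem C jP.
have Cij : critical e t i j by apply: ji_sub; apply: crit_self.
case/splitPr E2: _ / jP => [pre post].
have Cpj : chain e t set0 (rcons pre j) by apply: (@chain_prefix' _ _ _ _ _ _ _ post); rewrite -E2.
have : i \in rcons pre j by apply: crit_mem Cij Cpj.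
rewrite mem_rcons inE => /orP[/eqP ij|ipre]; first by exfalso; apply: ji.
case/splitPr E3: _ / ipre => [a b].
have [_ Enw] : u = a /\ n :: w = b ++ j :: post.
  by apply: (uniq_split (x := i)) => //; rewrite -E E2 E3 -catA.
apply/(crit_iff _ T F Cpj).
case: b E3 Enw => [|b0 b] E3 /= [-> _]; first by rewrite mem_rcons mem_head.
by rewrite E3 mem_rcons in_cons mem_cat !in_cons eqxx !orbT.
Qed.


Lemma pay_m t m q x : idm_tc e t (Some (m, q)) x ->
  x m = Wstar e t [set m] + \sum_(k <- q) cost e k.
Proof. by move=> [_ [_ [_ [_ [_ /(_ m) [H _]]]]]]; apply: H. Qed.

Lemma pay_off t m q x i : idm_tc e t (Some (m, q)) x -> i \notin rcons q m -> x i = 0.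
Proof.
move=> [_ [C [_ [_ [_ /(_ i) [_ [_ [_ H]]]]]]]] iP.
have im : i <> m by move=> im; move: iP; rewrite im mem_rcons mem_head.
apply: H => //; last by move: iP; rewrite mem_rcons in_cons negb_or => /andP[].
by move/crit_mem => /(_ _ _ C); apply/negP.
Qed.

Lemma last_split (q u w : seq A) (m i n : A) : rcons q m = u ++ i :: n :: w -> m = last n w.
Proof. by move/(congr1 (last m)); rewrite last_rcons last_cat. Qed.

Lemma split_ne (q u w : seq A) (m i n : A) : uniq (rcons q m) -> rcons q m = u ++ i :: n :: w ->
  i <> m /\ i \in q.
Proof.
move=> U E; have Em := last_split E.
have iNm : i <> m.
  move=> im; move: U; rewrite E cat_uniq => /and3P[_ _ /andP[]].
  by rewrite im Em mem_last.
split=> //.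
have : i \in rcons q m by rewrite E mem_cat in_cons eqxx orbT.
by rewrite mem_rcons in_cons => /orP[/eqP|].
Qed.

Lemma pay_on t m q x u i n w : is_tree (net_adj e tt) -> feasible e tt t ->
  idm_tc e t (Some (m, q)) x -> rcons q m = u ++ i :: n :: w ->
  x i = Wstar e t [set i] - Wstar e t [set n] - cost e i.
Proof.
move=> T F Hx E; move: (Hx) => [_ [C [_ [_ [_ /(_ i) [_ [H _]]]]]]].
have [im _] := split_ne (chain_uniq C) E.
have Ci : critical e t i m by apply/(crit_iff _ T F C); rewrite E mem_cat in_cons eqxx orbT.
have [j [Sj ->]] := H im Ci.
have Ii : informed e t set0 i by apply: informed_mem C _; rewrite E mem_cat in_cons eqxx orbT.
have In : informed e t set0 n by apply: informed_mem C _; rewrite E mem_cat !in_cons eqxx !orbT.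
by rewrite (WD Ii) (succ_id T F C E Sj) (WD In).
Qed.

Lemma util_none t x i : idm_tc e t None x -> utility e tt None x i = 0.
Proof. by move=> [_ H]; rewrite /utility H subr0. Qed.

Lemma util_off t m q x i : idm_tc e t (Some (m, q)) x -> i \notin rcons q m ->
  utility e tt (Some (m, q)) x i = 0.
Proof.
move=> Hx iP; rewrite /utility (pay_off Hx iP) subr0.
move: iP; rewrite mem_rcons in_cons negb_or => /andP[/negbTE -> /negbTE ->].
by [].
Qed.

Lemma util_on t m q x u i n w : is_tree (net_adj e tt) -> feasible e tt t ->
  idm_tc e t (Some (m, q)) x -> rcons q m = u ++ i :: n :: w ->
  utility e tt (Some (m, q)) x i = Wstar e t [set n] - Wstar e t [set i].
Proof.
move=> T F Hx E; move: (Hx) => [_ [C _]].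
have [/eqP/negbTE im iq] := split_ne (chain_uniq C) E.
rewrite /utility im iq (pay_on T F Hx E).
lra.
Qed.

End Outcome.



Section Main.
Variables (R : realType) (A : finType) (e : env A R) (tt : profile A R).
Hypothesis T : is_tree (net_adj e tt).
Implicit Types (t : profile A R) (X Y : set A) (p q : seq A).

Lemma eff t a x : idm_tc e t a x ->
  forall a', valid_alloc e t set0 a' -> welfare e t a' <= welfare e t a.
Proof.
case: a => [[m q]|] /=.
  move=> [b [C [Hc [S0 [Hmax _]]]]] [[m' q']|] /=; last by rewrite Hc.
  move=> [b' C']; rewrite Hc; apply: le_trans (Hmax m' b' _); last by exists q'.
  by rewrite /SW lerD2l lerN2; apply: lcc_lb C'.
move=> [Hs _] [[m' q']|] //= [b' C'].
apply: le_trans (Hs m' b' _); last by exists q'.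
by rewrite /SW lerD2l lerN2; apply: lcc_lb C'.
Qed.

Lemma W_le_out t a x X : idm_tc e t a x -> Wstar e t X <= welfare e t a.
Proof. by move=> H; apply: W_le => a' /valid_set0 V; exact: (eff H V). Qed.

Lemma split_mem q m i : uniq (rcons q m) -> i \in rcons q m -> i <> m ->
  exists u n w, rcons q m = u ++ i :: n :: w.
Proof.
move=> U; case/splitPr E: _ / => [u s] im.
case: s E => [|n w] E; last by exists u, n, w.
by move: E; rewrite cats1 => /rcons_inj [_ /esym].
Qed.

Lemma crit_next t q m u i n w : feasible e tt t ->
  chain e t set0 (rcons q m) -> rcons q m = u ++ i :: n :: w ->
  [/\ critical e t i n, informed e t set0 i & informed e t set0 n].
Proof.
move=> F C E.
have Cn : chain e t set0 (rcons (rcons u i) n).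
  by apply: (@chain_prefix' _ _ _ _ _ _ _ w); rewrite cat_rcons -E.
split.
- by apply/(crit_iff _ T F Cn); rewrite mem_rcons inE mem_rcons mem_head orbT.
- by apply: informed_mem C _; rewrite E mem_cat in_cons eqxx orbT.
- by apply: informed_mem C _; rewrite E mem_cat !in_cons eqxx !orbT.
Qed.

Lemma IR_buyer t a x i : feasible e tt t -> idm_tc e t a x -> buyer e i ->
  truthful_at e tt t i -> 0 <= utility e tt a x i.
Proof.
move=> F Hx bi; rewrite /truthful_at bi => tb.
case: a Hx => [[m q]|] Hx; last by rewrite (util_none tt i Hx).
have [_ [C [Hc _]]] := Hx.
have [Emi|im] := eqVneq m i.
  subst m; rewrite /utility eqxx (pay_m Hx) -tb.
  have := W_le_out [set i] Hx; rewrite /= => H.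
  lra.
rewrite (util_off tt Hx) //.
rewrite mem_rcons in_cons eq_sym (negbTE im) /=.
by apply/negP => /(chain_nonbuyer C); rewrite bi.
Qed.

Lemma IR_inter t a x i : feasible e tt t -> idm_tc e t a x -> ~~ buyer e i ->
  0 <= utility e tt a x i.
Proof.
move=> F Hx bi.
case: a Hx => [[m q]|] Hx; last by rewrite (util_none tt i Hx).
have [bm [C _]] := Hx.
have [iP|iP] := boolP (i \in rcons q m); last by rewrite (util_off tt Hx).
have [u [n [w E]]] : exists u n w, rcons q m = u ++ i :: n :: w.
  by apply: split_mem (chain_uniq C) iP _ => im; move: bi; rewrite im bm.
rewrite (util_on T F Hx E) subr_ge0.
have [Cin Ii In] := crit_next F C E.
by rewrite -(WD Ii) -(WD In); apply: W_anti; apply: dset_sub.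
Qed.


Lemma tele (x D c : A -> R) q m :
  (forall u i n w, rcons q m = u ++ i :: n :: w -> x i = D i - D n - c i) ->
  \sum_(i <- q) x i = D (head m q) - D m - \sum_(i <- q) c i.
Proof.
elim: q => [|v q IH] H; first by rewrite !big_nil; lra.
have E0 : rcons (v :: q) m = [::] ++ v :: head m q :: behead (rcons q m) by case: q {IH H}.
rewrite !big_cons (H _ _ _ _ E0) IH /=; first by lra.
by move=> u i n w E; apply: (H (v :: u)); rewrite rcons_cons E.
Qed.

Lemma revenue_some t m q x : feasible e tt t -> idm_tc e t (Some (m, q)) x ->
  revenue x = Wstar e t [set head m q].
Proof.
move=> F Hx; have [_ [C _]] := Hx.
have U := chain_uniq C.
rewrite /revenue (bigID (fun i => i \in rcons q m)) /=.
rewrite [X in _ + X]big1 ?addr0; last by move=> i /negbTE/negbT; apply: pay_off Hx.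
rewrite -big_uniq // big_rcons /= (pay_m Hx).
rewrite (@tele x (fun v => Wstar e t [set v]) (cost e) q m); first by lra.
by move=> u i n w E; apply: pay_on T F Hx E.
Qed.

Lemma revenue_none t x : idm_tc e t None x -> revenue x = 0.
Proof. by move=> [_ H]; rewrite /revenue big1. Qed.

Lemma vick t a x j k : feasible e tt t -> idm_tc e t a x ->
  j \in rs e -> k \in rs e -> buyer e j -> buyer e k -> j != k ->
  Num.min (bid t j) (bid t k) <= revenue x.
Proof.
move=> F Hx jr kr bj bk jk.
case: a Hx => [[m q]|] Hx.
  rewrite (revenue_some F Hx).
  suff H : forall l, l \in rs e -> buyer e l -> l != head m q -> bid t l <= Wstar e t [set head m q].
    have [Ej|Nj] := eqVneq j (head m q).
      by rewrite ge_min (H k) ?orbT // -Ej eq_sym.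
    by rewrite ge_min (H j).
  move=> l lr bl lh.
  have := @W_ub _ _ e t [set head m q] (Some (l, [::])).
  rewrite /= big_nil subr0; apply; split=> //; split=> //; split=> //.
  by move=> /eqP; rewrite (negbTE lh).
rewrite (revenue_none Hx) ge_min; apply/orP; left.
have [Hs _] := Hx.
have Cj : chain e t set0 (rcons [::] j) by split=> //; split.
have := Hs j bj (ex_intro _ [::] Cj); rewrite /SW.
have := lcc_lb Cj; rewrite big_nil.
lra.
Qed.


Lemma links_iff (E E' : A -> A -> Prop) x q :
  (forall u v, E u v <-> E' u v) -> (links E x q <-> links E' x q).
Proof. by move=> H; split; apply: links_mono => u v /H. Qed.

Lemma chain_iff_links t t' X p :
  (forall u v, link e t X u v <-> link e t' X u v) -> (chain e t X p <-> chain e t' X p).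
Proof.
move=> H; case: p => [|x q] //=.
split=> -[? [? [L ?]]]; do !split => //; move: L; apply: links_mono => u v; apply (H u v).
Qed.

Lemma chain_same_X t t' i X p : same_except t t' i -> X i ->
  (chain e t X p <-> chain e t' X p).
Proof.
move=> S Xi; apply: chain_iff_links => u v.
have [ui|ui] := eqVneq u i; first by subst u; split=> -[].
by rewrite /link (proj2 (S u (elimN eqP ui))).
Qed.

Lemma chain_same_buyer t t' i X p : same_except t t' i -> buyer e i ->
  (chain e t X p <-> chain e t' X p).
Proof.
move=> S bi; apply: chain_iff_links => u v.
have [ui|ui] := eqVneq u i; first by subst u; split=> -[_ [_ []]]; rewrite bi.
by rewrite /link (proj2 (S u (elimN eqP ui))).
Qed.

Lemma chain_rcons_same t t' i X p : same_except t t' i ->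
  chain e t X (rcons p i) -> chain e t' X (rcons p i).
Proof.
move=> S; case: p => [|x p] /=; first by move=> [? [? [_ ?]]]; do !split.
move=> [xr [Xx [L U]]]; do !split => //.
have iN : i \notin x :: p.
  by have : uniq (rcons (x :: p) i) by []; rewrite rcons_uniq => /andP[].
move: L; apply: links_src => u v; rewrite belast_rcons => up.
have ui : u <> i by move=> ui; move: iN; rewrite -ui up.
by rewrite /link (proj2 (S u ui)).
Qed.

Lemma same_sym t t' i : same_except t t' i -> same_except t' t i.
Proof. by move=> S k ki; have [-> ->] := S k ki. Qed.

Lemma informed_same t t' i : same_except t t' i ->
  informed e t set0 i -> informed e t' set0 i.
Proof. by move=> S [q C]; exists q; apply: chain_rcons_same S C. Qed.

Lemma W_same t t' i X : same_except t t' i -> X i -> Wstar e t X = Wstar e t' X.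
Proof.
move=> S Xi; apply: W_eq => [[[m q]|]|[[m q]|]] //=.
  by split=> -[b C]; split=> //; [apply/(chain_same_X _ S Xi)|apply/(chain_same_X _ S Xi)].
move=> [b C]; have mP : m \in rcons q m by rewrite mem_rcons mem_head.
have mi : m <> i by move=> mi; apply: (chain_notX C mP); rewrite mi.
by rewrite (proj1 (S m mi)).
Qed.

Lemma chain_sub t t' i X p : same_except t t' i -> nbr t i = nbr tt i ->
  feasible e tt t' -> informed e t' set0 i -> chain e t' X p -> chain e t X p.
Proof.
move=> S ti F' Ii; case: p => [|x q] //=.
move=> [? [? [L ?]]]; do !split => //; move: L; apply: links_mono => u v.
have [ui|ui] := eqVneq u i.
  subst u; move=> [? [? [b n]]]; do !split => //.
  have [_ /(_ b) /fintype.subsetP sub] := F' i Ii.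
  by rewrite ti; apply: sub.
by rewrite /link (proj2 (S u (elimN eqP ui))).
Qed.


Lemma IC t t' a x a' x' i : feasible e tt t -> feasible e tt t' -> same_except t t' i ->
  truthful_at e tt t i -> idm_tc e t a x -> idm_tc e t' a' x' ->
  utility e tt a' x' i <= utility e tt a x i.
Proof.
move=> F F' S tr Hx Hx'.
have [bi|bi] := boolP (buyer e i).
- have tb : bid t i = bid tt i by move: tr; rewrite /truthful_at bi.
  have IR0 := IR_buyer F Hx bi tr.
  case: a' Hx' => [[m' q']|] Hx'; last by rewrite (util_none tt i Hx').
  have [bm' [C' [Hc' _]]] := Hx'.
  have [Emi|mi] := eqVneq m' i; last first.
    rewrite (util_off tt Hx') // mem_rcons in_cons eq_sym (negbTE mi) /=.
    by apply/negP => /(chain_nonbuyer C'); rewrite bi.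
  subst m'.
  have Wi : Wstar e t' [set i] = Wstar e t [set i] by symmetry; apply: W_same S _.
  have Ci : chain e t set0 (rcons q' i) by apply/(chain_same_buyer _ _ S bi).
  have Lc : lcc_cost e t' i = lcc_cost e t i.
    rewrite /lcc_cost; congr (inf (image _ _)); apply/funext => q; apply/propext.
    by split=> /= H; apply/(chain_same_buyer _ _ S bi).
  have -> : utility e tt (Some (i, q')) x' i = bid tt i - Wstar e t [set i] - lcc_cost e t i.
    by rewrite /utility eqxx (pay_m Hx') Wi Hc' Lc; lra.
  case: a Hx IR0 => [[m q]|] Hx IR0.
  + have [bm [C [Hc [S0 [Hmax _]]]]] := Hx.
    have [Emi|mi] := eqVneq m i.
      by subst m; rewrite /utility eqxx (pay_m Hx) Hc; lra.
    have iP : i \notin rcons q m.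
      rewrite mem_rcons in_cons eq_sym (negbTE mi) /=.
      by apply/negP => /(chain_nonbuyer C); rewrite bi.
    rewrite (util_off tt Hx iP).
    have : welfare e t (Some (m, q)) <= Wstar e t [set i].
      apply: W_ub; split=> //; apply/chain_X; split=> // v vP /= vi.
      by move: iP; rewrite -vi vP.
    have := Hmax i bi (ex_intro _ q' Ci); rewrite /SW /= Hc -tb.
    lra.
  + have [Hs _] := Hx; rewrite (util_none tt i Hx).
    have := Hs i bi (ex_intro _ q' Ci); have := W_ge0 e t [set i]; rewrite /SW -tb.
    lra.
- have tn : nbr t i = nbr tt i by move: tr; rewrite /truthful_at (negbTE bi).
  have IR0 := IR_inter F Hx bi.
  case: a' Hx' => [[m' q']|] Hx'; last by rewrite (util_none tt i Hx').
  have [bm' [C' _]] := Hx'.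
  have [iP'|iP'] := boolP (i \in rcons q' m'); last by rewrite (util_off tt Hx').
  have Ii' : informed e t' set0 i by apply: informed_mem C' iP'.
  have Sub : forall X p, chain e t' X p -> chain e t X p.
    by move=> X p; apply: chain_sub S tn F' Ii'.
  have im' : i <> m' by move=> im; move: bi; rewrite im bm'.
  have [u' [n' [w' E']]] := split_mem (chain_uniq C') iP' im'.
  rewrite (util_on T F' Hx' E').
  have Wi : Wstar e t' [set i] = Wstar e t [set i] by symmetry; apply: W_same S _.
  have Wsub : forall X, Wstar e t' X <= Wstar e t X.
    move=> X; apply: W_trans => -[[m q]|] //= [bm C]; split; first by split=> //; apply: Sub.
    have mi : m <> i by move=> mi; move: bi; rewrite -mi bm.
    by rewrite (proj1 (S m mi)).
  have mi' : m' <> i by move=> mi; apply: im'.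
  have Wn'2 : Wstar e t' [set n'] <= welfare e t (Some (m', q')).
    by apply: le_trans (W_le_out [set n'] Hx') _; rewrite /= (proj1 (S m' mi')).
  have Ct' : chain e t set0 (rcons q' m') by apply: Sub.
  have Va' : valid_alloc e t set0 (Some (m', q')) by split.
  rewrite Wi.
  case: a Hx IR0 => [[m q]|] Hx IR0; last first.
    rewrite (util_none tt i Hx); have := eff Hx Va'; have := W_ge0 e t [set i].
    move: Wn'2; rewrite /=; lra.
  have [bm [C _]] := Hx.
  have [iP|iP] := boolP (i \in rcons q m); last first.
    rewrite (util_off tt Hx iP).
    have : welfare e t (Some (m, q)) <= Wstar e t [set i].
      apply: W_ub; split=> //; apply/chain_X; split=> // v vP /= vi.
      by move: iP; rewrite -vi vP.
    have := eff Hx Va'; move: Wn'2; rewrite /=; lra.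
  have im : i <> m by move=> im; move: bi; rewrite im bm.
  have [u [n [w E]]] := split_mem (chain_uniq C) iP im.
  rewrite (util_on T F Hx E).
  suff : Wstar e t' [set n'] <= Wstar e t [set n] by lra.
  have [<-|nn] := eqVneq n' n; first by apply: Wsub.
  apply: le_trans Wn'2 _; apply: W_ub; split=> //; apply/chain_X; split=> // v vP /= vn.
  subst v.
  case/splitPr E2: _ / vP => [pre post].
  have Cpre : chain e t set0 (rcons pre n).
    by apply: (@chain_prefix' _ _ _ _ _ _ _ post); rewrite -E2.
  have Cu : chain e t set0 (rcons (rcons u i) n).
    by apply: (@chain_prefix' _ _ _ _ _ _ _ w); rewrite cat_rcons -E.
  have Epre := chain_unique T F Cpre Cu.
  have U' : uniq (u' ++ i :: n' :: w') by rewrite -E'; apply: chain_uniq C'.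
  have E0 : u' ++ i :: n' :: w' = u ++ i :: n :: post by rewrite -E' E2 Epre cat_rcons.
  have [_ /(congr1 (head n)) /= En] := uniq_split U' E0.
  by move/eqP: nn; apply.
Qed.

End Main.

Unset Implicit Arguments.

Theorem proposition1 (R : realType) (A : finType) (e : env A R) (tt : profile A R) :
  (forall i, buyer e i -> 0 <= bid tt i) ->
  is_tree (net_adj e tt) ->
  [/\ efficient e tt (idm_tc e),
      individually_rational e tt (idm_tc e),
      incentive_compatible e tt (idm_tc e),
      weakly_budget_balanced e tt (idm_tc e) &
      revenue_ge_vickrey e tt (idm_tc e)].
Proof.
move=> _ T; split.
- by move=> t a x F Hx a' V; apply: (eff Hx V).
- move=> t a x i F Hx; split.
    by move=> bi tr; apply: (IR_buyer F Hx bi tr).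
  by move=> bi; apply: (IR_inter T F Hx bi).
- by move=> i t t' a x a' x' F F' S tr Hx Hx'; apply: (IC T F F' S tr Hx Hx').
- move=> t a x F Hx; case: a Hx => [[m q]|] Hx.
    by rewrite (revenue_some T F Hx); apply: W_ge0.
  by rewrite (revenue_none Hx).
- by move=> t a x F Hx j k jr kr bj bk jk; apply: (vick T F Hx jr kr bj bk jk).
Qed.
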